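(* If $(X,d)$ is a finite metric space of cardinality $n$, then there exists $\alpha\in(0,1)$ such that $(X,d^\alpha)$ admits an isometric embedding into the Euclidean space $\mathbb R^n$.
   Context: For a metric space $(X,d)$ and $\alpha\in(0,1)$, $d^\alpha$ denotes the metric $(x,y)\mapsto d(x,y)^\alpha$. *)

(* Defs.v *)
From Stdlib Require Import Reals List.
Import ListNotations.
Open Scope R_scope.

Definition is_metric {X : Type} (d : X -> X -> R) : Prop :=
  (forall x y, 0 <= d x y) /\
  (forall x y, d x y = 0 <-> x = y) /\
  (forall x y, d x y = d y x) /\
  (forall x y z, d x z <= d x y + d y z).

Definition has_card (X : Type) (n : nat) : Prop :=
  exists l : list X, NoDup l /\ (forall x, In x l) /\ length l = n.

(* Real power t^a for t >= 0, with the convention 0^a = 0 (a > 0). *)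
Definition rpow (t a : R) : R := if Rle_dec t 0 then 0 else Rpower t a.

(* Points of R^n are represented by functions nat -> R, only coordinates
   0..n-1 being relevant. Euclidean distance in R^n: *)
Definition euclid_dist (n : nat) (u v : nat -> R) : R :=
  sqrt (fold_right Rplus 0 (map (fun i => (u i - v i) ^ 2) (seq 0 n))).

(* Main.v *)
Require Import Defs.
From Stdlib Require Import Reals List Lra Lia IndefiniteDescription.
Open Scope R_scope.

Fixpoint sm (f : nat -> R) (m : nat) : R :=
  match m with O => 0 | S p => sm f p + f p end.

Lemma sm_ext f h m : (forall k, (k < m)%nat -> f k = h k) -> sm f m = sm h m.
Proof. induction m; cbn [sm]; intros H; auto.
  rewrite IHm by (intros; apply H; lia). rewrite (H m) by lia. reflexivity. Qed.

Lemma sm_zero f m : (forall k, (k < m)%nat -> f k = 0) -> sm f m = 0.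
Proof. induction m; cbn [sm]; intros H; auto.
  rewrite IHm by (intros; apply H; lia). rewrite (H m) by lia. ring. Qed.

Lemma sm_plus f h m : sm (fun k => f k + h k) m = sm f m + sm h m.
Proof. induction m; cbn [sm]; [ring | rewrite IHm; ring]. Qed.

Lemma sm_scal c f m : sm (fun k => c * f k) m = c * sm f m.
Proof. induction m; cbn [sm]; [ring | rewrite IHm; ring]. Qed.

Lemma sm_bound f B m : (forall k, (k < m)%nat -> Rabs (f k) <= B) ->
  Rabs (sm f m) <= INR m * B.
Proof. induction m; cbn [sm]; intros H.
  - rewrite Rabs_R0; simpl; lra.
  - rewrite S_INR. eapply Rle_trans; [apply Rabs_triang|].
    specialize (IHm (fun k Hk => H k ltac:(lia))). specialize (H m ltac:(lia)). lra.
Qed.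

Lemma sm_delta c p m : (p < m)%nat ->
  sm (fun k => if Nat.eq_dec k p then c else 0) m = c.
Proof. induction m; intros Hp; [lia|]. cbn [sm].
  destruct (Nat.eq_dec m p).
  - subst. rewrite sm_zero; [ring|]. intros k Hk; destruct (Nat.eq_dec k p); [lia|auto].
  - rewrite IHm by lia; ring.
Qed.

Lemma fold_plus a L : fold_right Rplus a L = fold_right Rplus 0 L + a.
Proof. induction L; simpl; [ring | rewrite IHL; ring]. Qed.

Lemma fold_sm h m : fold_right Rplus 0 (map h (seq 0 m)) = sm h m.
Proof. induction m; [reflexivity|].
  rewrite seq_S, map_app, fold_right_app. cbn [map fold_right sm].
  rewrite fold_plus, IHm. simpl. ring. Qed.

Lemma fwd (n m : nat) (g : nat -> nat -> R) eps (V : nat -> nat -> R) :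
  (m < n)%nat -> 0 <= eps -> 16 * INR n * eps <= 1 ->
  (forall i k, (i < m)%nat -> (i < k)%nat -> V i k = 0) ->
  (forall i, (i < m)%nat -> 1/2 <= V i i) ->
  (forall i k, (i < m)%nat -> (k < i)%nat -> Rabs (V i k) <= 4*eps) ->
  (forall j, (j < m)%nat -> Rabs (g m j) <= eps) ->
  forall p, (p <= m)%nat -> exists r : nat -> R,
    (forall k, (p <= k)%nat -> r k = 0) /\ (forall k, Rabs (r k) <= 4*eps) /\
    (forall j, (j < p)%nat -> sm (fun k => r k * V j k) m = g m j).
Proof.
  intros Hmn He Hn H0 Hd Hb Hg. induction p; intros Hp.
  - exists (fun _ => 0). split; [auto|]. split; [intros; rewrite Rabs_R0; lra|].
    intros; lia.
  - destruct IHp as [r [Hr0 [Hrb Hrs]]]; [lia|].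
    set (S := sm (fun k => r k * V p k) m).
    assert (HS : Rabs S <= INR m * (4*eps*(4*eps))).
    { apply sm_bound. intros k Hk. destruct (Compare_dec.lt_dec k p).
      - rewrite Rabs_mult. apply Rmult_le_compat; try apply Rabs_pos; auto.
      - destruct (Nat.eq_dec k p).
        + rewrite (Hr0 k) by lia. rewrite Rmult_0_l, Rabs_R0. nra.
        + rewrite (H0 p k) by lia. rewrite Rmult_0_r, Rabs_R0. nra. }
    assert (Hvp : 1/2 <= V p p) by (apply Hd; lia).
    set (val := (g m p - S) / V p p).
    assert (Hval : val * V p p = g m p - S) by (unfold val; field; lra).
    assert (HmI : INR m + 1 <= INR n).
    { rewrite <- S_INR. apply le_INR. lia. }
    assert (Hm0 : 0 <= INR m) by apply pos_INR.
    assert (Hgp : Rabs (g m p) <= eps) by (apply Hg; lia).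
    assert (Hvb : Rabs val <= 4 * eps).
    { assert (Rabs val * V p p <= eps + INR m * (4*eps*(4*eps))).
      { rewrite <- (Rabs_pos_eq (V p p)) by lra. rewrite <- Rabs_mult, Hval.
        unfold Rminus. eapply Rle_trans; [apply Rabs_triang|]. rewrite Rabs_Ropp. lra. }
      assert (0 <= Rabs val) by apply Rabs_pos.
      assert (16 * INR m * eps <= 1) by nra.
      nra. }
    exists (fun k => if Nat.eq_dec k p then val else r k).
    split; [|split].
    + intros k Hk. destruct (Nat.eq_dec k p); [lia|]. apply Hr0; lia.
    + intros k. destruct (Nat.eq_dec k p); auto.
    + intros j Hj. destruct (Nat.eq_dec j p).
      * subst j.
        rewrite (sm_ext _ (fun k => r k * V p k + (if Nat.eq_dec k p then val * V p p else 0))).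
        -- rewrite sm_plus, sm_delta by lia. fold S. rewrite Hval. ring.
        -- intros k Hk. destruct (Nat.eq_dec k p).
           ++ subst. rewrite (Hr0 p) by lia. ring.
           ++ ring.
      * rewrite <- (Hrs j) by lia. apply sm_ext. intros k Hk.
        destruct (Nat.eq_dec k p); auto. subst. rewrite (H0 j p) by lia. ring.
Qed.

Lemma chol_ind (n : nat) (g : nat -> nat -> R) eps :
  0 <= eps -> 16 * INR n * eps <= 1 ->
  (forall i j, (i < n)%nat -> (j < n)%nat -> g i j = g j i) ->
  (forall i, (i < n)%nat -> g i i = 1/2) ->
  (forall i j, (i < n)%nat -> (j < n)%nat -> i <> j -> Rabs (g i j) <= eps) ->
  forall m, (m <= n)%nat -> exists V : nat -> nat -> R,
  (forall i k, (i < m)%nat -> (i < k)%nat -> V i k = 0) /\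
  (forall i, (i < m)%nat -> 1/2 <= V i i) /\
  (forall i k, (i < m)%nat -> (k < i)%nat -> Rabs (V i k) <= 4*eps) /\
  (forall i j, (i < m)%nat -> (j < m)%nat -> sm (fun k => V i k * V j k) m = g i j).
Proof.
  intros He Hn Hsym Hdg Hoff. induction m; intros Hm.
  - exists (fun _ _ => 0). repeat split; intros; lia.
  - destruct IHm as [V [H0 [Hd [Hb Hs]]]]; [lia|].
    destruct (fwd n m g eps V ltac:(lia) He Hn H0 Hd Hb) with (p := m)
      as [r [Hr0 [Hrb Hrs]]]; [intros j Hj; apply Hoff; lia| lia |].
    set (q := 1/2 - sm (fun k => r k * r k) m).
    assert (HS : Rabs (sm (fun k => r k * r k) m) <= INR m * (4*eps*(4*eps))).
    { apply sm_bound. intros k Hk. rewrite Rabs_mult.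
      apply Rmult_le_compat; try apply Rabs_pos; auto. }
    assert (HmI : INR m + 1 <= INR n).
    { rewrite <- S_INR. apply le_INR. lia. }
    assert (Hm0 : 0 <= INR m) by apply pos_INR.
    assert (Hq : 1/4 <= q).
    { unfold q. assert (16 * INR m * eps <= 1) by nra. assert (16 * eps <= 1) by nra.
      unfold Rabs in HS; destruct Rcase_abs in HS; nra. }
    assert (Hsq : sqrt q * sqrt q = q) by (apply sqrt_sqrt; lra).
    assert (Hsq0 : 0 <= sqrt q) by apply sqrt_pos.
    exists (fun i k => if Nat.eq_dec i m then (if Nat.eq_dec k m then sqrt q else r k) else V i k).
    split; [|split; [|split]].
    + intros i k Hi Hk. destruct (Nat.eq_dec i m).
      * destruct (Nat.eq_dec k m); [lia|]. apply Hr0; lia.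
      * apply H0; lia.
    + intros i Hi. destruct (Nat.eq_dec i m).
      * destruct (Nat.eq_dec m m); [|lia]. nra.
      * apply Hd; lia.
    + intros i k Hi Hk. destruct (Nat.eq_dec i m).
      * destruct (Nat.eq_dec k m); [lia|]. auto.
      * apply Hb; lia.
    + intros i j Hi Hj. cbn [sm].
      destruct (Nat.eq_dec i m); destruct (Nat.eq_dec j m).
      * subst i j. destruct (Nat.eq_dec m m); [|lia].
        rewrite (sm_ext _ (fun k => r k * r k)).
        -- rewrite Hdg by lia. fold q. rewrite Hsq. unfold q. ring.
        -- intros k Hk. destruct (Nat.eq_dec k m); [lia|auto].
      * subst i. destruct (Nat.eq_dec m m); [|lia].
        rewrite (H0 j m) by lia.
        rewrite (sm_ext _ (fun k => r k * V j k)).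
        -- rewrite Hrs by lia. ring.
        -- intros k Hk. destruct (Nat.eq_dec k m); [lia|auto].
      * subst j. destruct (Nat.eq_dec m m); [|lia].
        rewrite (H0 i m) by lia.
        rewrite (sm_ext _ (fun k => r k * V i k)).
        -- rewrite Hrs by lia. rewrite Hsym by lia. ring.
        -- intros k Hk. destruct (Nat.eq_dec k m); [lia|]. ring.
      * rewrite (H0 i m) by lia. rewrite Hs by lia. ring.
Qed.

Lemma list_bound (s : list R) : exists Lb, 0 <= Lb /\ forall t, In t s -> Rabs (ln t) <= Lb.
Proof. induction s as [|a s IH].
  - exists 0; split; [lra| intros t []].
  - destruct IH as [Lb [HL H]]. exists (Rmax (Rabs (ln a)) Lb). split.
    + eapply Rle_trans; [exact HL| apply Rmax_r].
    + intros t [<-|Ht]; [apply Rmax_l|]. eapply Rle_trans; [apply H; auto| apply Rmax_r].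
Qed.

Lemma rpow_nonneg t a : 0 <= rpow t a.
Proof. unfold rpow; destruct Rle_dec; [lra|]. unfold Rpower. left; apply exp_pos. Qed.

Lemma alpha_exists (s : list R) eps : 0 < eps ->
  exists a, 0 < a < 1 /\ forall t, In t s -> 0 < t -> Rabs (1 - (rpow t a)^2) <= 2*eps.
Proof.
  intros He. destruct (list_bound s) as [Lb [HL Hb]].
  assert (Hc : continuity_pt exp 0) by (apply derivable_continuous_pt; apply derivable_pt_exp).
  unfold continuity_pt, continue_in, limit1_in, limit_in in Hc.
  destruct (Hc (2*eps) ltac:(lra)) as [del [Hdel Hdl]].
  set (a := Rmin (1/2) (del / (2*(Lb+1)))).
  assert (Ha0 : 0 < a).
  { unfold a. apply Rmin_glb_lt; [lra|]. apply Rdiv_lt_0_compat; lra. }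
  assert (Ha1 : a <= 1/2) by apply Rmin_l.
  assert (Ha2 : a * (2*(Lb+1)) <= del).
  { assert (H := Rmin_r (1/2) (del / (2*(Lb+1)))). fold a in H.
    apply Rmult_le_compat_r with (r := 2*(Lb+1)) in H; [|lra].
    replace (del / (2*(Lb+1)) * (2*(Lb+1))) with del in H by (field; lra). exact H. }
  exists a. split; [lra|]. intros t Ht Ht0.
  unfold rpow. destruct Rle_dec; [lra|]. unfold Rpower.
  replace ((exp (a * ln t))^2) with (exp (2*a*ln t)).
  2:{ replace (2*a*ln t) with (a*ln t + a*ln t) by ring. rewrite exp_plus. ring. }
  destruct (Req_dec (2*a*ln t) 0) as [E|E].
  - rewrite E, exp_0. rewrite Rminus_diag, Rabs_R0. lra.
  - assert (Hl := Hb t Ht).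
    assert (Hu : Rabs (2*a*ln t) < del).
    { rewrite Rabs_mult, (Rabs_pos_eq (2*a)) by lra. nra. }
    specialize (Hdl (2*a*ln t)). simpl in Hdl. unfold R_dist in Hdl.
    rewrite exp_0 in Hdl.
    assert (R : Rabs (exp (2*a*ln t) - 1) < 2*eps).
    { apply Hdl. split; [split; [exact I| auto]|]. rewrite Rminus_0_r. exact Hu. }
    rewrite Rabs_minus_sym. lra.
Qed.

Theorem proposition2p2 (X : Type) (d : X -> X -> R) (n : nat) :
  is_metric d -> has_card X n ->
  exists alpha : R, 0 < alpha < 1 /\
    exists f : X -> (nat -> R),
      forall x y : X, euclid_dist n (f x) (f y) = rpow (d x y) alpha.
Proof.
  intros [Hpos [Hzero [Hsym Htri]]] [l [Hnd [Hin Hlen]]].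
  destruct l as [|x0 l'].
  { exists (1/2). split; [lra|]. exists (fun _ _ => 0). intros x; destruct (Hin x). }
  set (L := x0 :: l') in *.
  set (eps := 1 / (16 * (INR n + 1))).
  assert (Hn0 : 0 <= INR n) by apply pos_INR.
  assert (He : 0 < eps) by (unfold eps; apply Rdiv_lt_0_compat; lra).
  assert (Hn : 16 * INR n * eps <= 1).
  { unfold eps. apply (Rmult_le_reg_r (16 * (INR n + 1))); [lra|].
    field_simplify; lra. }
  destruct (alpha_exists (map (fun p => d (fst p) (snd p)) (list_prod L L)) eps He)
    as [a [Ha Hal]].
  exists a. split; [exact Ha|].
  set (D := fun i j => rpow (d (nth i L x0) (nth j L x0)) a).
  set (g := fun i j => if Nat.eq_dec i j then 1/2 else (1 - (D i j)^2)/2).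
  destruct (chol_ind n g eps ltac:(lra) Hn) with (m := n) as [V [_ [_ [_ HV]]]].
  - intros i j Hi Hj. unfold g. destruct (Nat.eq_dec i j); destruct (Nat.eq_dec j i);
      try lia; auto. unfold D. rewrite Hsym. reflexivity.
  - intros i Hi. unfold g. destruct (Nat.eq_dec i i); [auto|lia].
  - intros i j Hi Hj Hij. unfold g. destruct (Nat.eq_dec i j); [lia|].
    assert (Hne : nth i L x0 <> nth j L x0).
    { intros E. apply Hij. apply (proj1 (NoDup_nth L x0) Hnd); auto; lia. }
    assert (Hd : 0 < d (nth i L x0) (nth j L x0)).
    { destruct (Hpos (nth i L x0) (nth j L x0)) as [P|P]; auto.
      exfalso; apply Hne; apply Hzero; auto. }
    assert (HI : In (d (nth i L x0) (nth j L x0)) (map (fun p => d (fst p) (snd p)) (list_prod L L))).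
    { apply (in_map (fun p => d (fst p) (snd p)) _ (nth i L x0, nth j L x0)).
      apply in_prod; apply nth_In; lia. }
    specialize (Hal _ HI Hd). fold (D i j) in Hal.
    unfold Rabs in *; destruct Rcase_abs; destruct Rcase_abs; lra.
  - lia.
  - assert (Hidx : forall x, exists i, (i < n)%nat /\ nth i L x0 = x).
    { intros x. destruct (In_nth L x x0 (Hin x)) as [i [Hi E]]. exists i; split; auto; lia. }
    set (idx := fun x => proj1_sig (constructive_indefinite_description _ (Hidx x))).
    assert (Hidx' : forall x, (idx x < n)%nat /\ nth (idx x) L x0 = x).
    { intros x. unfold idx. destruct constructive_indefinite_description; auto. }
    exists (fun x => V (idx x)). intros x y.
    destruct (Hidx' x) as [Hi Ex]. destruct (Hidx' y) as [Hj Ey].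
    set (i := idx x) in *. set (j := idx y) in *.
    unfold euclid_dist. rewrite fold_sm.
    rewrite (sm_ext _ (fun k => (V i k * V i k + V j k * V j k) + (-2) * (V i k * V j k))).
    2:{ intros; ring. }
    rewrite sm_plus, sm_plus, sm_scal, !HV by auto.
    unfold g. destruct (Nat.eq_dec i i); [|lia]. destruct (Nat.eq_dec j j); [|lia].
    destruct (Nat.eq_dec i j) as [E|E].
    + rewrite <- Ex, <- Ey, E. rewrite (proj2 (Hzero _ _) eq_refl).
      unfold rpow. destruct Rle_dec; [|lra].
      replace (1/2 + 1/2 + -2 * (1/2)) with 0 by field. apply sqrt_0.
    + replace (1/2 + 1/2 + -2 * ((1 - D i j ^ 2) / 2)) with (D i j ^ 2) by field.
      rewrite sqrt_pow2 by apply rpow_nonneg. unfold D. rewrite Ex, Ey. reflexivity.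
Qed.
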